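(* Let $\mathcal K$ be an abstract Krivine structure, $\mathsf E=\mathsf S(\mathsf K(\mathsf S\mathsf K\mathsf K))$, and for $P\subseteq\Pi$ put $\eta P=\{\mathsf E\mathsf E\}^\perp\ast_\bullet{}^\perp P$. Then for all $P\subseteq\Pi$ and $L\subseteq\Lambda$: $$P\ast_\bullet L\subseteq P\ast L\subseteq P\ast_\perp L\subseteq P\,\clubsuit\,L\subseteq \eta P\ast_\bullet L\subseteq\eta P\ast L\subseteq\eta P\ast_\perp L.$$
   Context: An abstract Krivine structure $\mathcal K$ consists of sets $\Lambda$ (terms), $\Pi$ (stacks), a relation $\perp\subseteq\Lambda\times\Pi$ (write $t\perp\pi$), a map $\mathrm{push}:\Lambda\times\Pi\to\Pi$ written $t\cdot\pi$ (associating to the right), a map $\mathrm{app}:\Lambda\times\Lambda\to\Lambda$ written $ts$ (associating to the left), a subset $\mathrm{QP}\subseteq\Lambda$ closed under application, and $\mathsf K,\mathsf S\in\mathrm{QP}$ such that for all $t,s,u\in\Lambda$, $\pi\in\Pi$: (a) $t\perp s\cdot\pi$ implies $ts\perp\pi$; (b) $t\perp\pi$ implies $\mathsf K\perp t\cdot s\cdot\pi$; (c) $tu(su)\perp\pi$ implies $\mathsf S\perp t\cdot s\cdot u\cdot\pi$. Polars: $L^\perp=\{\pi:\forall t\in L,\ t\perp\pi\}$, ${}^\perp P=\{t:\forall\pi\in P,\ t\perp\pi\}$; $\overline P=({}^\perp P)^\perp$. Define $P\ast L=\{\pi: t\cdot\pi\in P\ \forall t\in L\}$, $P\ast_\perp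 L=\overline{P\ast L}$, $P\ast_\bullet L=\{\pi: t\cdot\pi'\in P\ \forall t\in L,\ \pi'\in\overline{\{\pi\}}\}$, $P\,\clubsuit\,L=(\{t\ell:t\in{}^\perp P,\ \ell\in L\})^\perp$. *)

(* Defs.v *)
Set Implicit Arguments.

Record AKS := {
  Lam : Type;
  Pi : Type;
  perp : Lam -> Pi -> Prop;
  push : Lam -> Pi -> Pi;
  app : Lam -> Lam -> Lam;
  QP : Lam -> Prop;
  QP_app : forall t s, QP t -> QP s -> QP (app t s);
  Kc : Lam;
  Sc : Lam;
  K_QP : QP Kc;
  S_QP : QP Sc;
  ax_push : forall t s pi, perp t (push s pi) -> perp (app t s) pi;
  ax_K : forall t s pi, perp t pi -> perp Kc (push t (push s pi));
  ax_S : forall t s u pi, perp (app (app t u) (app s u)) pi ->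
           perp Sc (push t (push s (push u pi)))
}.

Section Defs.
Context {K : AKS}.

Definition subset {T} (A B : T -> Prop) := forall x, A x -> B x.

Definition polL (L : Lam K -> Prop) : Pi K -> Prop :=
  fun pi => forall t, L t -> perp K t pi.
Definition polP (P : Pi K -> Prop) : Lam K -> Prop :=
  fun t => forall pi, P pi -> perp K t pi.
Definition bicl (P : Pi K -> Prop) : Pi K -> Prop := polL (polP P).

Definition star (P : Pi K -> Prop) (L : Lam K -> Prop) : Pi K -> Prop :=
  fun pi => forall t, L t -> P (push K t pi).
Definition star_perp P L := bicl (star P L).
Definition star_bullet (P : Pi K -> Prop) (L : Lam K -> Prop) : Pi K -> Prop :=
  fun pi => forall t pi', L t -> bicl (fun x => x = pi) pi' -> P (push K t pi').
Definition club (P : Pi K -> Prop) (L : Lam K -> Prop) : Pi K -> Prop :=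
  polL (fun u => exists t l, polP P t /\ L l /\ u = app K t l).

Definition Ec : Lam K :=
  app K (Sc K) (app K (Kc K) (app K (app K (Sc K) (Kc K)) (Kc K))).
Definition eta (P : Pi K -> Prop) : Pi K -> Prop :=
  star_bullet (polL (fun t => t = app K Ec Ec)) (polP P).
End Defs.

(* Main.v *)
Require Import Defs.

Section L.
Variable K : AKS.
Let I := app K (app K (Sc K) (Kc K)) (Kc K).

Lemma I_red x pi : perp K x pi -> perp K I (push K x pi).
Proof.
  intro H. unfold I. apply ax_push. apply ax_push. apply ax_S.
  apply ax_push. apply ax_push. apply ax_K. exact H.
Qed.

Lemma KI_red x y pi : perp K I (push K y pi) -> perp K (app K (app K (Kc K) I) x) (push K y pi).
Proof.
  intro H. apply ax_push. apply ax_push. apply ax_K. exact H.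
Qed.

Lemma E_red u t pi : perp K (app K u t) pi -> perp K (app K Ec u) (push K t pi).
Proof.
  intro H. unfold Ec. apply ax_push. apply ax_push. apply ax_S.
  apply ax_push. apply KI_red. apply I_red. exact H.
Qed.

Lemma EE_red u rho : perp K (app K Ec u) rho -> perp K (app K Ec Ec) (push K u rho).
Proof.
  intro H. apply ax_push. unfold Ec at 1. apply ax_push. apply ax_S.
  apply ax_push. apply KI_red. apply I_red. exact H.
Qed.
End L.

Theorem mainTheorem6 (K : AKS) (P : Pi K -> Prop) (L : Lam K -> Prop) :
  subset (star_bullet P L) (star P L) /\
  subset (star P L) (star_perp P L) /\
  subset (star_perp P L) (club P L) /\
  subset (club P L) (star_bullet (eta P) L) /\
  subset (star_bullet (eta P) L) (star (eta P) L) /\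
  subset (star (eta P) L) (star_perp (eta P) L).
Proof.
  assert (A1 : forall Q, subset (star_bullet Q L) (star Q L)).
  { intros Q pi H t Ht. apply H; auto. intros x Hx. apply Hx. reflexivity. }
  assert (A2 : forall Q, subset (star Q L) (star_perp Q L)).
  { intros Q pi H x Hx. apply Hx. exact H. }
  split; [apply A1|]. split; [apply A2|].
  split.
  { intros pi H u [t [l [Ht [Hl ->]]]]. apply H. intros pi' Hpi'.
    apply ax_push. apply Ht. apply Hpi'. exact Hl. }
  split.
  { intros pi H t pi' Ht Hpi'. intros u rho Hu Hrho x Hx. rewrite Hx.
    apply EE_red. apply Hrho. intros z Hz. rewrite Hz. apply E_red.
    apply Hpi'. intros w Hw. rewrite Hw. apply H. exists u, t. auto. }
  split; [apply A1|apply A2].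
Qed.
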